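(* Let $n\ge 1$, let $p,p_1,\dots,p_n$ be distinct propositional variables and $s\neq *$ a standpoint symbol. Let $C_n$ be the formula $(\neg p_1\wedge\cdots\wedge\neg p_n)\wedge G\big(p_1\wedge\cdots\wedge p_n\to X(\neg p_1\wedge\cdots\wedge\neg p_n)\big)\wedge\bigwedge_{1\le i\le n}G\Big(\big(\neg p_i\wedge\bigwedge_{i<i'\le n}p_{i'}\big)\to\big(\bigwedge_{i<i'\le n}X\neg p_{i'}\wedge Xp_i\wedge\bigwedge_{1\le i'<i}(p_{i'}\leftrightarrow Xp_{i'})\big)\Big)$, and let $\varphi_C=G\big(\Diamond_s(C_n\wedge p\wedge XG\neg p)\big)$. Then $\varphi_C$ is $\mathrm{SLTL}$-satisfiable. Moreover, for every $\mathrm{SLTL}$ model $M=(\Pi,\lambda)$ and $\sigma\in\Pi$ with $M,\sigma,0\models\varphi_C$: (1) $\lambda(s)$ is infinite; (2) for every $i>2^n$ and every $m\in\{0,\dots,2^n-1\}$ there is $\sigma'\in\Pi$ such that $M,\sigma',i\models \mathtt{C}=m$; (3) for every $i>2^n$ there are $\sigma_1,\dots,\sigma_{2^n}\in\Pi$ such that $|\{\sigma_j(i)\cap\{p_1,\dots,p_n\}: j\in\{1,\dots,2^n\}\}|=2^n$.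
   Context: Fix a countably infinite set $\mathcal{P}$ of propositional variables and a countably infinite set $\mathcal{S}$ of standpoint symbols containing a distinguished universal standpoint symbol $*$. SLTL formulae: $\varphi ::= p \mid s \preceq s' \mid \neg\varphi \mid \varphi\wedge\varphi \mid \Diamond_s\varphi \mid \Box_s\varphi \mid X\varphi \mid \varphi\,U\,\varphi$. A model is $M=(\Pi,\lambda)$ with $\Pi\neq\emptyset$ a set of traces $\sigma:\mathbb{N}\to 2^{\mathcal{P}}$ and $\lambda:\mathcal{S}\to 2^{\Pi}\setminus\{\emptyset\}$, $\lambda( * )=\Pi$. Semantics: $M,\sigma,i\models p$ iff $p\in\sigma(i)$; $M,\sigma,i\models s\preceq s'$ iff $\lambda(s)\subseteq\lambda(s')$; Boolean clauses as usual; $M,\sigma,i\models\Diamond_s\psi$ iff $M,\sigma',i\models\psi$ for some $\sigma'\in\lambda(s)$; $\Box_s$ dually with ''for all''; $M,\sigma,i\models X\psi$ iff $M,\sigma,i+1\models\psi$; $M,\sigma,i\models\psi\,U\,\chi$ iff there is $i'\ge i$ with $M,\sigma,i'\models\chi$ and $M,\sigma,i''\models\psi$ for all $i\le i''<i'$. $G\psi$ abbreviates $\neg(\top\,U\,\neg\psi)$ (''always in the future, including now''). $\varphi$ is satisfiable iff $M,\sigma,0\models\varphi$ for some model $M=(\Pi,\lambda)$ and $\sigma\in\Pi$. For $m\in\{0,\dots,2^n-1\}$, $M,\sigma,i\models\mathtt{C}=m$ means that the bit string $b_1\cdots b_n$ with $b_j=1$ iff $p_j\in\sigma(i)$ ($b_1$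 most significant) is the binary representation of $m$. *)

(* Defs.v *)
From mathcomp Require Import all_boot.
From Stdlib Require List.
Set Implicit Arguments. Unset Strict Implicit. Unset Printing Implicit Defensive.

(* Propositional variables: nat (countably infinite).
   Standpoint symbols: Star (the universal standpoint * ) or Sym k, k : nat. *)
Inductive stand := Star | Sym of nat.

Inductive form :=
| Var of nat
| Sharp of stand & stand
| Not of form
| And of form & form
| Dia of stand & form
| Box of stand & form
| Next of form
| Until of form & form.

(* A trace sigma : N -> 2^P, represented as sigma i q = true iff q ∈ sigma(i). *)
Definition trace := nat -> nat -> bool.

Record model := Model {
  Pi : trace -> Prop;
  lam : stand -> trace -> Prop;
  Pi_ne : exists sg, Pi sg;
  lam_sub : forall s sg, lam s sg -> Pi sg;
  lam_ne : forall s, exists sg, lam s sg;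
  lam_star : forall sg, lam Star sg <-> Pi sg
}.

Fixpoint sat (M : model) (sg : trace) (i : nat) (f : form) : Prop :=
  match f with
  | Var q => sg i q = true
  | Sharp s s' => forall t, lam M s t -> lam M s' t
  | Not g => ~ sat M sg i g
  | And g h => sat M sg i g /\ sat M sg i h
  | Dia s g => exists t, lam M s t /\ sat M t i g
  | Box s g => forall t, lam M s t -> sat M t i g
  | Next g => sat M sg i.+1 g
  | Until g h => exists i', i <= i' /\ sat M sg i' h /\
                   (forall i'', i <= i'' -> i'' < i' -> sat M sg i'' g)
  end.

Definition Top : form := Not (And (Var 0) (Not (Var 0))).
Definition Imp (a b : form) : form := Not (And a (Not b)).
Definition Iff (a b : form) : form := And (Imp a b) (Imp b a).
Definition Glob (a : form) : form := Not (Until Top (Not a)).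
Definition bigAnd (l : seq form) : form := foldr And Top l.

Definition satisfiable (f : form) : Prop :=
  exists (M : model) (sg : trace), Pi M sg /\ sat M sg 0 f.

Definition allNeg (pv : nat -> nat) (n : nat) : form :=
  bigAnd [seq Not (Var (pv k)) | k <- iota 1 n].
Definition allPos (pv : nat -> nat) (n : nat) : form :=
  bigAnd [seq Var (pv k) | k <- iota 1 n].

Definition Cn (pv : nat -> nat) (n : nat) : form :=
  And (allNeg pv n)
   (And (Glob (Imp (allPos pv n) (Next (allNeg pv n))))
        (bigAnd [seq Glob (Imp
                   (And (Not (Var (pv i)))
                        (bigAnd [seq Var (pv i') | i' <- iota i.+1 (n - i)]))
                   (And (bigAnd [seq Next (Not (Var (pv i'))) | i' <- iota i.+1 (n - i)])
                     (And (Next (Var (pv i)))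
                          (bigAnd [seq Iff (Var (pv i')) (Next (Var (pv i')))
                                  | i' <- iota 1 (i - 1)]))))
                 | i <- iota 1 n])).

Definition phiC (pv : nat -> nat) (n p : nat) (s : stand) : form :=
  Glob (Dia s (And (Cn pv n) (And (Var p) (Next (Glob (Not (Var p))))))).

(* M, sigma, i |= C = m : the bits b_1...b_n (b_1 most significant,
   b_j = 1 iff p_j ∈ sigma(i)) are the binary representation of m. *)
Definition counterEq (pv : nat -> nat) (n : nat) (sg : trace) (i m : nat) : Prop :=
  m = \sum_(1 <= j < n.+1) (sg i (pv j) : nat) * 2 ^ (n - j).

Definition finite_traces (A : trace -> Prop) : Prop :=
  exists l : seq trace, forall sg, A sg -> List.In sg l.

(* Main.v *)
Require Import Defs.
From mathcomp Require Import all_boot zify.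
From Stdlib Require Import Classical ClassicalEpsilon.
Set Warnings "-notation-overridden".


Arguments bigAnd : simpl never.

Lemma sat_bigAnd_map M t i (F : nat -> form) (s : seq nat) :
  sat M t i (bigAnd [seq F x | x <- s]) <-> (forall x, x \in s -> sat M t i (F x)).
Proof.
elim: s => [|a s IH].
  split => // _ /=; rewrite /bigAnd /=; by move=> [H1 H2].
rewrite /bigAnd /= -/(bigAnd _) IH; split.
  move=> [Ha Hs] x; rewrite in_cons => /orP [/eqP -> //|]; exact: Hs.
move=> H; split; first by apply: H; rewrite in_cons eqxx.
by move=> x Hx; apply: H; rewrite in_cons Hx orbT.
Qed.

Lemma sat_Glob M t i a : sat M t i (Glob a) <-> forall j, i <= j -> sat M t j a.
Proof.
rewrite /Glob /=; split.
  move=> H j Hij; apply: NNPP => Hn; apply: H; exists j; split => //; split => //.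
  by move=> *; move=> [H1 H2].
by move=> H [j [Hij [Hn _]]]; apply: Hn; apply: H.
Qed.

Lemma sat_Imp M t i a b : sat M t i (Imp a b) <-> (sat M t i a -> sat M t i b).
Proof.
rewrite /Imp /=; split.
  by move=> H Ha; apply: NNPP => Hb; apply: H.
by move=> H [Ha Hb]; apply: Hb; apply: H.
Qed.

Lemma sat_Iff M t i a b : sat M t i (Iff a b) <-> (sat M t i a <-> sat M t i b).
Proof. change (sat M t i (Imp a b) /\ sat M t i (Imp b a) <-> (sat M t i a <-> sat M t i b)); rewrite !sat_Imp; tauto. Qed.

Definition valb (n : nat) (b : nat -> bool) :=
  \sum_(1 <= j < n.+1) (b j : nat) * 2 ^ (n - j).

Lemma geom n d : d <= n -> \sum_((n - d).+1 <= j < n.+1) 2 ^ (n - j) = 2 ^ d - 1.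
Proof.
elim: d => [|d IH] Hd.
  by rewrite subn0 big_geq.
rewrite big_ltn; last lia.
have -> : (n - d.+1).+1 = n - d by lia.
rewrite IH; last lia.
have -> : n - (n - d) = d by lia.
rewrite expnS; have := expn_gt0 2 d; lia.
Qed.

Lemma val_ones n (b : nat -> bool) : (forall j, 1 <= j <= n -> b j) -> valb n b = 2 ^ n - 1.
Proof.
move=> H; rewrite /valb (eq_big_nat _ _ (F2 := fun j => 2 ^ (n - j))).
  by have := @geom n n (leqnn n); rewrite subnn.
by move=> j Hj; rewrite H ?mul1n //; lia.
Qed.

Lemma val_zeros n (b : nat -> bool) : (forall j, 1 <= j <= n -> b j = false) -> valb n b = 0.
Proof.
move=> H; rewrite /valb (eq_big_nat _ _ (F2 := fun j => 0)).
  by rewrite big1.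
by move=> j Hj; rewrite H //; lia.
Qed.

Lemma find_zero n (b : nat -> bool) : ~ (forall j, 1 <= j <= n -> b j) ->
  exists i0, 1 <= i0 <= n /\ b i0 = false /\ forall j, i0 < j <= n -> b j.
Proof.
move=> Hn.
suff S : forall a, a <= n -> (forall j, a < j <= n -> b j) ->
  exists i0, 1 <= i0 <= n /\ b i0 = false /\ forall j, i0 < j <= n -> b j.
  by apply: (S n) => // j; lia.
elim => [|a IH] Ha Hup.
  by exfalso; apply: Hn => j Hj; apply: Hup; lia.
case Hb: (b a.+1).
  apply: IH; first lia.
  move=> j Hj; case: (eqVneq j a.+1) => [->//|Hne]; apply: Hup; lia.
by exists a.+1; split; [lia|split].
Qed.

Lemma val_lt n (b : nat -> bool) : valb n b < 2 ^ n - 1 ->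
  exists i0, 1 <= i0 <= n /\ b i0 = false /\ forall j, i0 < j <= n -> b j.
Proof.
move=> H; apply: find_zero => Ho; move: H; rewrite val_ones //; lia.
Qed.

Lemma val_incr n (b b' : nat -> bool) i0 : 1 <= i0 <= n -> b i0 = false ->
  (forall j, i0 < j <= n -> b j) -> (forall j, i0 < j <= n -> b' j = false) ->
  b' i0 -> (forall j, 1 <= j < i0 -> b' j = b j) -> valb n b' = (valb n b).+1.
Proof.
move=> Hi0 Hb0 Hbu Hb'u Hb'0 Hlow.
rewrite /valb.
have Hc : forall c : nat -> bool, \sum_(1 <= j < n.+1) (c j : nat) * 2 ^ (n - j) =
   \sum_(1 <= j < i0) (c j : nat) * 2 ^ (n - j) + ((c i0 : nat) * 2 ^ (n - i0) +
   \sum_(i0.+1 <= j < n.+1) (c j : nat) * 2 ^ (n - j)).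
  move=> c; rewrite (big_cat_nat (n := i0)); [|by case/andP: Hi0|by apply: leqW; case/andP: Hi0].
  by rewrite (@big_ltn _ _ _ i0); last by case/andP: Hi0.
rewrite !Hc Hb0 Hb'0.
rewrite (eq_big_nat _ _ (F1 := fun j => (b' j : nat) * 2 ^ (n - j)) (F2 := fun j => (b j : nat) * 2 ^ (n - j))); last first.
  by move=> j Hj; rewrite Hlow.
rewrite (eq_big_nat _ _ (F1 := fun j => (b' j : nat) * 2 ^ (n - j)) (F2 := fun j => 0) (m := i0.+1)); last first.
  by move=> j Hj; rewrite Hb'u //; lia.
rewrite (eq_big_nat _ _ (F1 := fun j => (b j : nat) * 2 ^ (n - j)) (F2 := fun j => 2 ^ (n - j)) (m := i0.+1)); last first.
  by move=> j Hj; rewrite Hbu ?mul1n //; lia.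
have Z : \sum_(i0.+1 <= i < n.+1) 0 = 0 by rewrite big1.
rewrite Z.
have := @geom n (n - i0); rewrite (_ : n - (n - i0) = i0); last lia.
move=> ->; last lia.
have : 0 < 2 ^ (n - i0) by rewrite expn_gt0.
rewrite mul1n mul0n. lia.
Qed.

Lemma Cn_elim M t k pv n : sat M t k (Cn pv n) ->
 (forall j, 1 <= j <= n -> t k (pv j) = false) /\
 (forall i0 i, 1 <= i0 <= n -> k <= i -> t i (pv i0) = false ->
   (forall j, i0 < j <= n -> t i (pv j)) ->
   (forall j, i0 < j <= n -> t i.+1 (pv j) = false) /\ t i.+1 (pv i0) /\
   (forall j, 1 <= j < i0 -> t i.+1 (pv j) = t i (pv j))).
Proof.
rewrite /Cn /=; case=> [HA [HB HC]]; split.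
  move: HA; rewrite /allNeg sat_bigAnd_map => HA j Hj.
  have := HA j; rewrite mem_iota /= => /(_ ltac:(lia)).
  by move/negP/negbTE.
move=> i0 i Hi0 Hki Hf Hup.
move: HC; rewrite sat_bigAnd_map => /(_ i0); rewrite mem_iota => /(_ ltac:(lia)).
rewrite sat_Glob => /(_ i Hki); rewrite sat_Imp => HI.
have HAnt : sat M t i (And (Not (Var (pv i0))) (bigAnd [seq Var (pv i') | i' <- iota i0.+1 (n - i0)])).
  split; first by rewrite /= Hf.
  rewrite sat_bigAnd_map => j; rewrite mem_iota => Hj; apply: Hup; lia.
have H1 : sat M t i (bigAnd [seq Next (Not (Var (pv i'))) | i' <- iota i0.+1 (n - i0)]) := proj1 (HI HAnt).
have H2 : t i.+1 (pv i0) = true := proj1 (proj2 (HI HAnt)).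
have H3 : sat M t i (bigAnd [seq Iff (Var (pv i')) (Next (Var (pv i'))) | i' <- iota 1 (i0 - 1)]) := proj2 (proj2 (HI HAnt)).
move: H1; rewrite sat_bigAnd_map => H1.
split; [|split] => //.
  move=> j Hj; have := H1 j; rewrite mem_iota => /(_ ltac:(lia)) /=.
  by move/negP/negbTE.
move=> j Hj; move: H3; rewrite sat_bigAnd_map => /(_ j); rewrite mem_iota => /(_ ltac:(lia)).
rewrite sat_Iff /=.
case: (t i.+1 (pv j)); case: (t i (pv j)) => //; intuition.
Qed.

Lemma count_up M t k pv n : sat M t k (Cn pv n) ->
  forall d, d < 2 ^ n -> valb n (fun j => t (k + d) (pv j)) = d.
Proof.
move/Cn_elim => [HA HC]; elim => [|d IH] Hd.
  by rewrite addn0 val_zeros.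
have IH' := IH (ltnW Hd).
have [i0 [Hi0 [Hb0 Hup]]] := @val_lt n (fun j => t (k + d) (pv j)) ltac:(lia).
have [H1 [H2 H3]] := HC i0 (k + d) Hi0 (leq_addr _ _) Hb0 Hup.
rewrite addnS (@val_incr n (fun j => t (k + d) (pv j)) _ i0) //.
by rewrite IH'.
Qed.

Definition stepb (n : nat) (b : nat -> bool) : nat -> bool :=
  fun j => if all b (iota j.+1 (n - j)) then ~~ b j else b j.
Definition st n d := iter d (stepb n) (fun _ => false).
Definition tr (n p : nat) (pv : nat -> nat) (k : nat) : trace :=
  fun i q => ((q == p) && (i == k)) ||
             ((k <= i) && has (fun j => (q == pv j) && st n (i - k) j) (iota 1 n)).

Lemma tr_p n p pv k i : (forall i, 1 <= i <= n -> pv i <> p) -> tr n p pv k i p = (i == k).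
Proof.
move=> Hp; rewrite /tr eqxx /=.
have -> : has (fun j => (p == pv j) && st n (i - k) j) (iota 1 n) = false.
  apply/negbTE/hasPn => j; rewrite mem_iota => Hj.
  have -> : (p == pv j) = false.
    by apply/negbTE/eqP => E; apply: (Hp j); [lia|rewrite E].
  by [].
by rewrite andbF orbF.
Qed.

Lemma tr_pv n p pv k i j :
  (forall i j, 1 <= i <= n -> 1 <= j <= n -> pv i = pv j -> i = j) ->
  (forall i, 1 <= i <= n -> pv i <> p) -> 1 <= j <= n ->
  tr n p pv k i (pv j) = (k <= i) && st n (i - k) j.
Proof.
move=> Hinj Hp Hj; rewrite /tr.
have -> : (pv j == p) = false by apply/negbTE/eqP; apply: Hp.
rewrite /=; congr (_ && _).
apply/hasP/idP.
  move=> [j' Hj' /andP [/eqP E H]]; move: Hj'; rewrite mem_iota => Hj'.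
  by rewrite (Hinj j j') //; lia.
by move=> H; exists j; [rewrite mem_iota; lia|rewrite eqxx].
Qed.

Lemma sat_And M t i a b : sat M t i a -> sat M t i b -> sat M t i (And a b).
Proof. by split. Qed.

Lemma st_succ n d : st n d.+1 = stepb n (st n d).
Proof. by []. Qed.

Lemma tr_Cn M n p pv k :
  (forall i j, 1 <= i <= n -> 1 <= j <= n -> pv i = pv j -> i = j) ->
  (forall i, 1 <= i <= n -> pv i <> p) ->
  sat M (tr n p pv k) k (Cn pv n).
Proof.
move=> Hinj Hp.
have E : forall i j, 1 <= j <= n -> k <= i ->
   tr n p pv k i (pv j) = st n (i - k) j.
  by move=> i j Hj Hi; rewrite tr_pv // Hi.
have Es : forall i j, 1 <= j <= n -> k <= i ->
   tr n p pv k i.+1 (pv j) = stepb n (st n (i - k)) j.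
  by move=> i j Hj Hi; rewrite E ?subSn //; lia.
apply: sat_And.
  rewrite /allNeg sat_bigAnd_map => j; rewrite mem_iota => Hj /=.
  by rewrite E ?subnn //; lia.
apply: sat_And.
  rewrite sat_Glob => i Hi; rewrite sat_Imp /allPos sat_bigAnd_map => H.
change (sat M (tr n p pv k) i.+1 (allNeg pv n));   rewrite /allNeg sat_bigAnd_map => j; rewrite mem_iota => Hj /=.
  rewrite Es; try lia.
  rewrite /stepb.
  have Hall : all (st n (i - k)) (iota j.+1 (n - j)).
    apply/allP => y; rewrite mem_iota => Hy.
    have Hy' : y \in iota 1 n by rewrite mem_iota; lia.
    have := H y Hy'; rewrite /= E; [by []|lia|lia].
  rewrite Hall.
  have Hj' : j \in iota 1 n by rewrite mem_iota; lia.
  have := H j Hj'; rewrite /= E; [by move=> ->|lia|lia].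
rewrite sat_bigAnd_map => i0; rewrite mem_iota => Hi0.
rewrite sat_Glob => i Hi; rewrite sat_Imp => HAnt.
have Hf : st n (i - k) i0 = false.
  have := proj1 HAnt; rewrite /= E; [by case: (st n (i - k) i0)|lia|lia].
have Hup : forall y, i0 < y <= n -> st n (i - k) y.
  have : sat M (tr n p pv k) i (bigAnd [seq Var (pv i') | i' <- iota i0.+1 (n - i0)]) := proj2 HAnt.
  rewrite sat_bigAnd_map => H y Hy.
  have Hy' : y \in iota i0.+1 (n - i0) by rewrite mem_iota; lia.
  have := H y Hy'; rewrite /= E; [by []|lia|lia].
have Hall : forall y, i0 <= y <= n -> all (st n (i - k)) (iota y.+1 (n - y)).
  move=> y Hy; apply/allP => z; rewrite mem_iota => Hz; apply: Hup; lia.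
apply: sat_And; [|apply: sat_And].
- rewrite sat_bigAnd_map => y; rewrite mem_iota => Hy /=.
  rewrite Es; try lia. rewrite /stepb Hall; try lia. by rewrite Hup //; lia.
- rewrite /= Es; try lia. by rewrite /stepb Hall ?Hf //; lia.
- rewrite sat_bigAnd_map => y; rewrite mem_iota => Hy; rewrite sat_Iff /=.
  rewrite Es; try lia. rewrite E; try lia.
rewrite /stepb.   have -> : all (st n (i - k)) (iota y.+1 (n - y)) = false.
    apply/negbTE/allPn; exists i0; first by rewrite mem_iota; lia.
    by rewrite Hf.
  by [].
Qed.

Lemma In_nth (A : Type) (d x : A) (l : seq A) : List.In x l -> exists k, k < size l /\ nth d l k = x.
Proof.
elim: l => [|a l IH] //= [->|H]; first by exists 0.
by have [k [Hk E]] := IH H; exists k.+1.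
Qed.

Theorem proposition1 (n : nat) (p : nat) (pv : nat -> nat) (s : stand) :
  1 <= n ->
  (forall i j, 1 <= i <= n -> 1 <= j <= n -> pv i = pv j -> i = j) ->
  (forall i, 1 <= i <= n -> pv i <> p) ->
  s <> Star ->
  satisfiable (phiC pv n p s) /\
  (forall (M : model) (sg : trace), Pi M sg -> sat M sg 0 (phiC pv n p s) ->
     ~ finite_traces (lam M s) /\
     (forall i, 2 ^ n < i -> forall m, m < 2 ^ n ->
        exists sg', Pi M sg' /\ counterEq pv n sg' i m) /\
     (forall i, 2 ^ n < i ->
        exists sgs : 'I_(2 ^ n) -> trace,
          (forall j, Pi M (sgs j)) /\
          #|[set [set k : 'I_n | sgs j i (pv k.+1)] | j : 'I_(2 ^ n)]| = 2 ^ n)).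
Proof.
move=> Hn Hinj Hp Hs; split.
  pose Pt := fun t => exists k, t = tr n p pv k.
  have Pne : exists t, Pt t by exists (tr n p pv 0), 0.
  have lne : forall s' : stand, exists t, (fun _ : stand => Pt) s' t by move=> _.
  pose M := @Model Pt (fun _ => Pt) Pne (fun _ _ h => h) lne (fun _ => iff_refl _).
  exists M, (tr n p pv 0); split; first by exists 0.
  rewrite /phiC sat_Glob => i _.
  exists (tr n p pv i); split; first by exists i.
  apply: sat_And; first exact: tr_Cn.
  apply: sat_And; first by change (tr n p pv i i p = true); rewrite tr_p // eqxx.
  change (sat M (tr n p pv i) i.+1 (Glob (Not (Var p)))).
  rewrite sat_Glob => j Hj /=; rewrite tr_p //.
  by have -> : (j == i) = false by apply/eqP; lia.
move=> M sg Hsg Hphi.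
have H : forall k, exists t, lam M s t /\ sat M t k (Cn pv n) /\ t k p /\
    forall j, k < j -> t j p = false.
  move=> k; move: Hphi; rewrite /phiC sat_Glob => /(_ k (leq0n k)) [t [Hl Hst]].
  exists t; split => //; split; first exact: (proj1 Hst).
  split; first exact: (proj1 (proj2 Hst)).
  have : sat M t k.+1 (Glob (Not (Var p))) := proj2 (proj2 Hst).
  rewrite sat_Glob => G j Hj; have := G j Hj; rewrite /=.
  by case: (t j p).
pose f k := proj1_sig (constructive_indefinite_description _ (H k)).
have Hf : forall k, lam M s (f k) /\ sat M (f k) k (Cn pv n) /\ f k k p /\
    forall j, k < j -> f k j p = false.
  by move=> k; exact: (proj2_sig (constructive_indefinite_description _ (H k))).
have finj : forall a b, f a = f b -> a = b.
  move=> a b E; case: (ltngtP a b) => // Hab.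
    have [_ [_ [_ Ha]]] := Hf a; have [_ [_ [Hb _]]] := Hf b.
    by have := Ha b Hab; rewrite E Hb.
  have [_ [_ [Ha _]]] := Hf a; have [_ [_ [_ Hb]]] := Hf b.
  by have := Hb a Hab; rewrite -E Ha.
have cnt : forall i x, 2 ^ n < i -> x < 2 ^ n ->
    valb n (fun j => f (i - x) i (pv j)) = x.
  move=> i x Hi Hx; have E := @count_up M _ _ _ _ (proj1 (proj2 (Hf (i - x)))) x Hx.
  by rewrite subnK in E; [exact: E|lia].
split; [|split].
- move=> [l Hl].
  have Hin : forall k, List.In (f k) l by move=> k; apply: Hl; exact: (proj1 (Hf k)).
  pose g k := proj1_sig (constructive_indefinite_description _ (@In_nth _ sg _ _ (Hin k))).
  have Hg : forall k, g k < size l /\ nth sg l (g k) = f k.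
    by move=> k; exact: (proj2_sig (constructive_indefinite_description _ (@In_nth _ sg _ _ (Hin k)))).
  have ginj : injective g.
    move=> a b E; apply: finj; by rewrite -(proj2 (Hg a)) -(proj2 (Hg b)) E.
  have U : uniq (map g (iota 0 (size l).+1)).
    by rewrite map_inj_uniq ?iota_uniq.
  have S : {subset map g (iota 0 (size l).+1) <= iota 0 (size l)}.
    by move=> y /mapP [k _ ->]; rewrite mem_iota add0n (proj1 (Hg k)).
  have := uniq_leq_size U S; rewrite size_map !size_iota; lia.
- move=> i Hi m Hm; exists (f (i - m)); split.
    by apply: (lam_sub (s := s)); exact: (proj1 (Hf _)).
  by rewrite /counterEq; exact: (esym (cnt i m Hi Hm)).
- move=> i Hi; exists (fun j : 'I_(2 ^ n) => f (i - j)); split.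
    by move=> j; apply: (lam_sub (s := s)); exact: (proj1 (Hf _)).
  rewrite card_imset ?card_ord // => j1 j2 E.
  apply: val_inj => /=.
  rewrite -(cnt i j1 Hi (ltn_ord j1)) -(cnt i j2 Hi (ltn_ord j2)).
  apply: eq_big_nat => jj Hjj.
  have Hlt : jj.-1 < n by lia.
  have := congr1 (fun S : {set 'I_n} => Ordinal Hlt \in S) E; rewrite !inE /=.
  by rewrite prednK //; [move=> ->|lia].
Qed.
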